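(* Let $n\ge2$ and let $e\in\mathcal{I}^{\ast}_n$ be an idempotent of rank $n-1$ (that is, $e$ has one block $\{x,y,x',y'\}$ with $x\ne y$ and blocks $\{t,t'\}$ for all $t\ne x,y$). Then the maximal subgroup $G(e)$ of $\mathcal{I}^{\ast}_n$ with identity $e$ is an isolated subsemigroup of $\mathcal{I}^{\ast}_n$.
   Context: Let $X=\{1,\dots,n\}$, $X'=\{1',\dots,n'\}$. $\mathcal{I}^{\ast}_n$ is the set of partitions of $X\cup X'$ all of whose blocks meet both $X$ and $X'$, with product: regard $\alpha$ as a partition of $X\cup X''$ and $\beta$ as a partition of $X''\cup X'$ ($X''$ a third copy of $X$), and let $\alpha\beta$ be the partition of $X\cup X'$ induced by the equivalence on $X\cup X''\cup X'$ generated by the blocks of both. Rank = number of blocks. $G(e)$ is the $\mathcal{H}$-class of $e$. A subsemigroup $T$ of a semigroup $S$ is isolated if for all $a\in S$ and $k\ge1$, $a^k\in T$ implies $a\in T$. *)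

(* Defs.v *)
From mathcomp Require Import all_boot.
Set Implicit Arguments. Unset Strict Implicit. Unset Printing Implicit Defensive.

(* Points of X ∪ X': inl i is the point i+1 of X, inr i is the point (i+1)' of X'. *)
Definition pt (n : nat) : finType := ('I_n + 'I_n)%type.

(* A partition of X ∪ X' is represented by its equivalence relation,
   given as the set of related pairs. *)
Definition part (n : nat) := {set (pt n * pt n)}.

Definition rel_of n (a : part n) : rel (pt n) := fun x y => (x, y) \in a.

Definition is_equiv n (a : part n) : Prop :=
  [/\ forall x, rel_of a x x,
      forall x y, rel_of a x y -> rel_of a y x &
      forall x y z, rel_of a x y -> rel_of a y z -> rel_of a x z].

Definition block n (a : part n) (x : pt n) : {set pt n} := [set y | rel_of a x y].

Definition Istar n (a : part n) : Prop :=
  is_equiv a /\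
  forall x : pt n, (exists i, rel_of a x (inl i)) /\ (exists i, rel_of a x (inr i)).

Definition rank n (a : part n) : nat := #|[set block a x | x : pt n]|.

(* Three copies X, X'', X' : (0,i) = i, (1,i) = i'', (2,i) = i' *)
Definition pt3 (n : nat) : finType := ('I_3 * 'I_n)%type.

Definition c0 : 'I_3 := @Ordinal 3 0 isT.
Definition c1 : 'I_3 := @Ordinal 3 1 isT.
Definition c2 : 'I_3 := @Ordinal 3 2 isT.

(* alpha regarded on X ∪ X'' *)
Definition embL n (x : pt n) : pt3 n :=
  match x with inl i => (c0, i) | inr i => (c1, i) end.
(* beta regarded on X'' ∪ X' *)
Definition embR n (x : pt n) : pt3 n :=
  match x with inl i => (c1, i) | inr i => (c2, i) end.
Definition embO n (x : pt n) : pt3 n :=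
  match x with inl i => (c0, i) | inr i => (c2, i) end.

Definition edge3 n (a b : part n) : rel (pt3 n) := fun u v =>
  [exists p in a, (embL p.1 == u) && (embL p.2 == v)] ||
  [exists p in b, (embR p.1 == u) && (embR p.2 == v)].

(* product: the equivalence generated by the blocks of both, restricted to X ∪ X' *)
Definition pmul n (a b : part n) : part n :=
  [set p : pt n * pt n | connect (edge3 a b) (embO p.1) (embO p.2)].

(* a^k for k >= 1 *)
Definition ppow n (a : part n) (k : nat) : part n := iter k.-1 (fun x => pmul x a) a.

(* Green's preorders and the H relation in the semigroup I*_n (using S^1) *)
Definition leR n (a b : part n) : Prop :=
  a = b \/ exists s, Istar s /\ a = pmul b s.
Definition leL n (a b : part n) : Prop :=
  a = b \/ exists s, Istar s /\ a = pmul s b.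
Definition Hrel n (a b : part n) : Prop :=
  [/\ leR a b, leR b a, leL a b & leL b a].

Definition Hclass n (e : part n) : part n -> Prop := fun a => Istar a /\ Hrel a e.

Definition is_subsemigroup n (T : part n -> Prop) : Prop :=
  (forall a, T a -> Istar a) /\ (forall a b, T a -> T b -> T (pmul a b)).

Definition isolated n (T : part n -> Prop) : Prop :=
  forall a, Istar a -> forall k, 1 <= k -> T (ppow a k) -> T a.

(* Main.v *)
Require Import Defs.
From mathcomp Require Import all_boot zify.
Set Implicit Arguments. Unset Strict Implicit. Unset Printing Implicit Defensive.

Section S.
Variable n : nat.
Implicit Types (a b e : part n) (x y : pt n).

Definition Tp a (i j : 'I_n) := rel_of a (inl i) (inl j).
Definition Bp a (i j : 'I_n) := rel_of a (inr i) (inr j).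
Definition idx (x : pt n) : 'I_n := match x with inl i => i | inr i => i end.

Lemma relR a x : Istar a -> rel_of a x x.
Proof. by case=> [[]]. Qed.
Lemma relS a x y : Istar a -> rel_of a x y -> rel_of a y x.
Proof. by case=> [[]] _ H _ _; apply: H. Qed.
Lemma relT a x y z : Istar a -> rel_of a x y -> rel_of a y z -> rel_of a x z.
Proof. by case=> [[]] _ _ H _; apply: H. Qed.

Definition top a x : 'I_n :=
  if [pick i | rel_of a x (inl i)] is Some i then i else idx x.
Definition bot a x : 'I_n :=
  if [pick i | rel_of a x (inr i)] is Some i then i else idx x.

Lemma topP a x : Istar a -> rel_of a x (inl (top a x)).
Proof.
move=> Ha; rewrite /top; case: pickP => [//|H].
by have [[i Hi] _] := Ha.2 x; rewrite H in Hi.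
Qed.
Lemma botP a x : Istar a -> rel_of a x (inr (bot a x)).
Proof.
move=> Ha; rewrite /bot; case: pickP => [//|H].
by have [_ [i Hi]] := Ha.2 x; rewrite H in Hi.
Qed.

Lemma edgeL a b x y : rel_of a x y -> edge3 a b (embL x) (embL y).
Proof. move=> h; apply/orP; left; apply/existsP; exists (x, y); rewrite /rel_of in h; by rewrite h !eqxx. Qed.
Lemma edgeR a b x y : rel_of b x y -> edge3 a b (embR x) (embR y).
Proof. move=> h; apply/orP; right; apply/existsP; exists (x, y); rewrite /rel_of in h; by rewrite h !eqxx. Qed.

Lemma edgeP a b u v : edge3 a b u v ->
  (exists x y, [/\ rel_of a x y, u = embL x & v = embL y]) \/
  (exists x y, [/\ rel_of b x y, u = embR x & v = embR y]).
Proof.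
by case/orP => /existsP [[x y] /andP [h /andP [/eqP <- /eqP <-]]]; [left|right];
  exists x, y.
Qed.

Lemma conn_inv a b (L : Type) (g : pt3 n -> L) (R : L -> L -> bool) :
  (forall z : L, R z z) -> (forall p q r : L, R p q -> R q r -> R p r) ->
  (forall u v, edge3 a b u v -> R (g u) (g v)) ->
  forall u v, connect (edge3 a b) u v -> R (g u) (g v).
Proof.
move=> Rr Rt He u v /connectP [p Hp ->]; elim: p u Hp => [|w p IH] u /=.
  by move=> _; apply: Rr.
case/andP=> e1 /IH; apply: Rt; exact: He.
Qed.

Lemma pmulE a b x y : rel_of (pmul a b) x y = connect (edge3 a b) (embO x) (embO y).
Proof. by rewrite /rel_of /pmul inE. Qed.

Lemma T_mulL a b i j : Tp a i j -> Tp (pmul a b) i j.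
Proof. by move=> h; rewrite /Tp pmulE; apply: connect1; apply: (edgeL b h). Qed.
Lemma B_mulR a b i j : Bp b i j -> Bp (pmul a b) i j.
Proof. by move=> h; rewrite /Bp pmulE; apply: connect1; apply: (edgeR a h). Qed.

Lemma edge_sym a b : Istar a -> Istar b -> symmetric (edge3 a b).
Proof.
move=> Ha Hb.
suff H : forall u v, edge3 a b u v -> edge3 a b v u by move=> u v; apply/idP/idP; apply: H.
move=> u v; case/edgeP => [[x [y [h -> ->]]]|[x [y [h -> ->]]]].
  by apply: edgeL; apply: relS.
by apply: edgeR; apply: relS.
Qed.

Lemma Istar_mul a b : Istar a -> Istar b -> Istar (pmul a b).
Proof.
move=> Ha Hb; split; [split|].
- by move=> x; rewrite pmulE; apply: connect0.
- by move=> x y; rewrite !pmulE (sym_connect_sym (edge_sym Ha Hb)).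
- by move=> x y z; rewrite !pmulE; apply: connect_trans.
case=> i; split.
- by exists i; rewrite pmulE; apply: connect0.
- exists (bot b (inl (bot a (inl i)))); rewrite pmulE.
  apply: connect_trans; first exact: connect1 (edgeL b (botP (inl i) Ha)).
  exact: connect1 (edgeR a (botP _ Hb)).
- exists (top a (inr (top b (inr i)))); rewrite pmulE.
  apply: connect_trans; first exact: connect1 (edgeR a (topP (inr i) Hb)).
  exact: connect1 (edgeL b (topP _ Ha)).
- by exists i; rewrite pmulE; apply: connect0.
Qed.


Lemma Tmul_sub a b : Istar a -> Istar b ->
  (forall i j, Tp b i j -> Bp a i j) ->
  forall i j, Tp (pmul a b) i j -> Tp a i j.
Proof.
move=> Ha Hb Hab i j; rewrite /Tp pmulE.
pose g (w : pt3 n) : 'I_n := let: (c, i) := w in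
  match nat_of_ord c with 0 => i | 1 => top a (inr i) | _ => top a (inr (top b (inr i))) end.
pose kb (x : pt n) : 'I_n := match x with inl k => k | inr l => top b (inr l) end.
have k1 : forall x, rel_of a x (inl (g (embL x))).
  by case=> k /=; [apply: relR | apply: topP].
have k2 : forall x, rel_of b x (inl (kb x)) /\ g (embR x) = top a (inr (kb x)).
  by case=> k /=; split => //; [apply: relR | apply: topP].
move/(@conn_inv a b _ g (Tp a)); apply.
- by move=> z; apply: relR.
- by move=> p q r; apply: relT.
move=> u v; case/edgeP => [[x [y [h -> ->]]]|[x [y [h -> ->]]]].
  rewrite /Tp; apply: relT (relS _ (k1 x)) _ => //; exact: relT h (k1 y).
have [bx gx] := k2 x; have [byy gy] := k2 y; rewrite gx gy.
have : Tp b (kb x) (kb y) by rewrite /Tp; apply: relT (relS _ bx) _ => //; exact: relT h byy.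
move/Hab; rewrite /Bp /Tp => h2.
apply: relT (relS _ (topP _ Ha)) _ => //; exact: relT h2 (topP _ Ha).
Qed.

Lemma Bmul_sub a b : Istar a -> Istar b ->
  (forall i j, Bp a i j -> Tp b i j) ->
  forall i j, Bp (pmul a b) i j -> Bp b i j.
Proof.
move=> Ha Hb Hab i j; rewrite /Bp pmulE.
pose g (w : pt3 n) : 'I_n := let: (c, i) := w in
  match nat_of_ord c with 0 => bot b (inl (bot a (inl i))) | 1 => bot b (inl i) | _ => i end.
pose ka (x : pt n) : 'I_n := match x with inl i => bot a (inl i) | inr k => k end.
have k1 : forall x, rel_of b x (inr (g (embR x))).
  by case=> k /=; [apply: botP | apply: relR].
have k2 : forall x, rel_of a x (inr (ka x)) /\ g (embL x) = bot b (inl (ka x)).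
  by case=> k /=; split => //; [apply: botP | apply: relR].
move/(@conn_inv a b _ g (Bp b)); apply.
- by move=> z; apply: relR.
- by move=> p q r; apply: relT.
move=> u v; case/edgeP => [[x [y [h -> ->]]]|[x [y [h -> ->]]]]; last first.
  rewrite /Bp; apply: relT (relS _ (k1 x)) _ => //; exact: relT h (k1 y).
have [bx gx] := k2 x; have [byy gy] := k2 y; rewrite gx gy.
have : Bp a (ka x) (ka y) by rewrite /Bp; apply: relT (relS _ bx) _ => //; exact: relT h byy.
move/Hab; rewrite /Bp /Tp => h2.
apply: relT (relS _ (botP _ Hb)) _ => //; exact: relT h2 (botP _ Hb).
Qed.


Lemma idem_diag e : Istar e -> pmul e e = e -> forall x, rel_of e x (inl (idx x)).
Proof.
move=> He Hee.
have C : forall x y, connect (edge3 e e) (embO x) (embO y) -> rel_of e x y.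
  by move=> x y h; rewrite -Hee pmulE.
have PQ : forall k k', Tp e k k' -> Bp e k k'.
  move=> k k' h.
  have : rel_of e (inl (top e (inr k))) (inl (top e (inr k'))).
    apply: C; apply: connect_trans.
      exact: connect1 (edgeL e (relS He (topP (inr k) He))).
    apply: connect_trans; first exact: connect1 (edgeR e h).
    exact: connect1 (edgeL e (topP (inr k') He)).
  move=> h2; rewrite /Bp; apply: relT (topP _ He) _ => //.
  exact: relT h2 (relS He (topP _ He)).
have D : forall i, rel_of e (inl i) (inr i).
  move=> i; set j := bot e (inl i); set m := bot e (inl j).
  have h1 : rel_of e (inl i) (inr m).
    apply: C; apply: connect_trans.
      exact: connect1 (edgeL e (botP (inl i) He)).
    exact: connect1 (edgeR e (botP (inl j) He)).
  have h2 : Tp e i j := relT He h1 (relS He (botP (inl j) He)).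
  have h3 := PQ _ _ h2.
  exact: relT He (botP (inl i) He) (relS He h3).
by case=> i /=; [apply: relR | exact: relS He (D i)].
Qed.

Lemma proj_char e : Istar e -> (forall x, rel_of e x (inl (idx x))) ->
  forall x y, rel_of e x y = Tp e (idx x) (idx y).
Proof.
move=> He D x y; apply/idP/idP => h.
  exact: relT He (relS He (D x)) (relT He h (D y)).
exact: relT He (D x) (relT He h (relS He (D y))).
Qed.

Definition sw (x : pt n) : pt n := match x with inl i => inr i | inr i => inl i end.
Definition tr a : part n := [set p | (sw p.1, sw p.2) \in a].

Lemma trE a x y : rel_of (tr a) x y = rel_of a (sw x) (sw y).
Proof. by rewrite /rel_of inE. Qed.

Lemma trK a : tr (tr a) = a.
Proof.
apply/setP => [[x y]]; rewrite !inE /=.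
by case: x; case: y.
Qed.

Lemma Istar_tr a : Istar a -> Istar (tr a).
Proof.
move=> Ha; split; [split|].
- by move=> x; rewrite trE; apply: relR.
- by move=> x y; rewrite !trE; apply: relS.
- by move=> x y z; rewrite !trE; apply: relT.
move=> x; have [[i Hi] [j Hj]] := Ha.2 (sw x); split.
  by exists j; rewrite trE; case: x Hi Hj.
by exists i; rewrite trE; case: x Hi Hj.
Qed.


Lemma W1 e a : Istar e -> (forall x, rel_of e x (inl (idx x))) -> Istar a ->
  (forall i j, Tp e i j -> Tp a i j) -> pmul e a = a.
Proof.
move=> He D Ha Hea; apply/setP => [[x y]].
change (rel_of (pmul e a) x y = rel_of a x y); rewrite pmulE.
have Ch := proj_char He D.
have CS := sym_connect_sym (edge_sym He Ha).
apply/idP/idP => h.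
  pose g (w : pt3 n) : pt n := let: (c, i) := w in
    match nat_of_ord c with 0 => inl i | 1 => inl i | _ => inr i end.
  have E : forall x, g (embO x) = x by case.
  move: h; move/(@conn_inv e a _ g (rel_of a)); rewrite !E; apply.
  - by move=> z; apply: relR.
  - by move=> p q r; apply: relT.
  move=> u v; case/edgeP => [[x' [y' [h -> ->]]]|[x' [y' [h -> ->]]]].
    have E2 : forall x, g (embL x) = inl (idx x) by case.
    rewrite !E2; apply: Hea; by rewrite -Ch.
  have E2 : forall x, g (embR x) = x by case.
  by rewrite !E2.
have P : forall x, connect (edge3 e a) (embO x) (embR x).
  case=> i /=; last exact: connect0.
  apply: connect1; apply: (edgeL a (x := inl i) (y := inr i)).
  by rewrite Ch /=; apply: relR.
apply: connect_trans (P x) _; apply: connect_trans (connect1 (edgeR e h)) _.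
by rewrite CS; apply: P.
Qed.

Lemma W2 e a : Istar e -> (forall x, rel_of e x (inl (idx x))) -> Istar a ->
  (forall i j, Tp e i j -> Bp a i j) -> pmul a e = a.
Proof.
move=> He D Ha Hea; apply/setP => [[x y]].
change (rel_of (pmul a e) x y = rel_of a x y); rewrite pmulE.
have Ch := proj_char He D.
have CS := sym_connect_sym (edge_sym Ha He).
apply/idP/idP => h.
  pose g (w : pt3 n) : pt n := let: (c, i) := w in
    match nat_of_ord c with 0 => inl i | 1 => inr i | _ => inr i end.
  have E : forall x, g (embO x) = x by case.
  move: h; move/(@conn_inv a e _ g (rel_of a)); rewrite !E; apply.
  - by move=> z; apply: relR.
  - by move=> p q r; apply: relT.
  move=> u v; case/edgeP => [[x' [y' [h -> ->]]]|[x' [y' [h -> ->]]]].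
    have E2 : forall x, g (embL x) = x by case.
    by rewrite !E2.
  have E2 : forall x, g (embR x) = inr (idx x) by case.
  rewrite !E2; apply: Hea; by rewrite -Ch.
have P : forall x, connect (edge3 a e) (embO x) (embL x).
  case=> i /=; first exact: connect0.
  apply: connect1; apply: (edgeR a (x := inr i) (y := inl i)).
  by rewrite Ch /=; apply: relR.
apply: connect_trans (P x) _; apply: connect_trans (connect1 (edgeL e h)) _.
by rewrite CS; apply: P.
Qed.

Lemma W3 e a : Istar e -> (forall x, rel_of e x (inl (idx x))) -> Istar a ->
  (forall i j, Tp a i j = Tp e i j) -> pmul a (tr a) = e.
Proof.
move=> He D Ha Hae; apply/setP => [[x y]].
change (rel_of (pmul a (tr a)) x y = rel_of e x y); rewrite pmulE.
have Ch := proj_char He D.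
have CS := sym_connect_sym (edge_sym Ha (Istar_tr Ha)).
rewrite Ch; transitivity (Tp a (idx x) (idx y)); last exact: Hae.
apply/idP/idP => h.
  pose g (w : pt3 n) : 'I_n := let: (c, i) := w in
    match nat_of_ord c with 0 => i | 1 => top a (inr i) | _ => i end.
  have E : forall x, g (embO x) = idx x by case.
  move: h; move/(@conn_inv a (tr a) _ g (Tp a)); rewrite !E; apply.
  - by move=> z; apply: relR.
  - by move=> p q r; apply: relT.
  have k1 : forall x, rel_of a x (inl (g (embL x))).
    by case=> k /=; [apply: relR | apply: topP].
  have k2 : forall x, rel_of a (sw x) (inl (g (embR x))).
    by case=> k /=; [apply: topP | apply: relR].
  move=> u v; case/edgeP => [[x' [y' [h -> ->]]]|[x' [y' [h -> ->]]]].
    rewrite /Tp; apply: relT (relS _ (k1 x')) _ => //; exact: relT h (k1 y').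
  rewrite trE in h.
  rewrite /Tp; apply: relT (relS _ (k2 x')) _ => //; exact: relT h (k2 y').
have P : forall x, connect (edge3 a (tr a)) (embO x) (embL (inl (idx x))).
  case=> i /=; first exact: connect0.
  apply: connect_trans.
    apply: connect1; apply: (edgeR a (x := inr i) (y := inl (bot a (inl i)))).
    by rewrite trE /=; apply: botP.
  apply: connect1; apply: (edgeL (tr a) (x := inr (bot a (inl i))) (y := inl i)).
  by apply: relS => //; apply: botP.
apply: connect_trans (P x) _; apply: connect_trans (connect1 (edgeL _ h)) _.
by rewrite CS; apply: P.
Qed.

Lemma W4 e a : Istar e -> (forall x, rel_of e x (inl (idx x))) -> Istar a ->
  (forall i j, Bp a i j = Tp e i j) -> pmul (tr a) a = e.
Proof.
move=> He D Ha Hae; rewrite -{2}(trK a); apply: W3 => //; first exact: Istar_tr.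
by move=> i j; rewrite -Hae /Tp trE.
Qed.


Lemma Hrel_back e a : Istar e -> (forall x, rel_of e x (inl (idx x))) -> Istar a ->
  (forall i j, Tp a i j = Tp e i j) -> (forall i j, Bp a i j = Tp e i j) -> Hrel a e.
Proof.
move=> He D Ha HT HB; split; right.
- exists a; split => //; symmetry; apply: W1 => // i j; by rewrite HT.
- exists (tr a); split; first exact: Istar_tr.
  by symmetry; apply: W3.
- exists a; split => //; symmetry; apply: W2 => // i j; by rewrite HB.
- exists (tr a); split; first exact: Istar_tr.
  by symmetry; apply: W4.
Qed.

Lemma Hrel_fwd e a : Istar e -> (forall x, rel_of e x (inl (idx x))) ->
  Hrel a e -> (forall i j, Tp a i j = Tp e i j) /\ (forall i j, Bp a i j = Tp e i j).
Proof.
move=> He D [r1 r2 l1 l2].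
have BE : forall i j, Bp e i j = Tp e i j by move=> i j; rewrite /Bp (proj_char He D).
have t1 : forall i j, Tp e i j -> Tp a i j.
  by case: r1 => [->|[s [_ ->]]] // i j; apply: T_mulL.
have t2 : forall i j, Tp a i j -> Tp e i j.
  by case: r2 => [->|[s [_ ->]]] // i j; apply: T_mulL.
have b1 : forall i j, Bp e i j -> Bp a i j.
  by case: l1 => [->|[s [_ ->]]] // i j; apply: B_mulR.
have b2 : forall i j, Bp a i j -> Bp e i j.
  by case: l2 => [->|[s [_ ->]]] // i j; apply: B_mulR.
split=> i j; apply/idP/idP; try by [apply: t1|apply: t2].
  by move/b2; rewrite BE.
by rewrite -BE; apply: b1.
Qed.

Lemma block_eq a x y : Istar a -> (block a x == block a y) = rel_of a x y.
Proof.
move=> Ha; apply/eqP/idP => [E|h].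
  have : y \in block a y by rewrite inE; apply: relR.
  by rewrite -E inE.
apply/setP => z; rewrite !inE; apply/idP/idP => h2.
  exact: relT Ha (relS Ha h) h2.
exact: relT Ha h h2.
Qed.

Definition cT a := #|[set block a (inl i) | i : 'I_n]|.
Definition cB a := #|[set block a (inr i) | i : 'I_n]|.

Lemma rankT a : Istar a -> rank a = cT a.
Proof.
move=> Ha; rewrite /rank /cT; apply: eq_card => S.
apply/imsetP/imsetP => [[x _ ->]|[i _ ->]].
  exists (top a x) => //; apply/eqP; rewrite block_eq //; exact: topP.
by exists (inl i).
Qed.

Lemma rankB a : Istar a -> rank a = cB a.
Proof.
move=> Ha; rewrite /rank /cB; apply: eq_card => S.
apply/imsetP/imsetP => [[x _ ->]|[i _ ->]].
  exists (bot a x) => //; apply/eqP; rewrite block_eq //; exact: botP.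
by exists (inr i).
Qed.

End S.

Lemma refine_card (T1 T2 : finType) (f g : T1 -> T2) :
  (forall i j, f i = f j -> g i = g j) ->
  #|[set g i | i : T1]| <= #|[set f i | i : T1]| /\
  (#|[set g i | i : T1]| = #|[set f i | i : T1]| -> forall i j, g i = g j -> f i = f j).
Proof.
move=> Hfg.
pose h y := if [pick i | f i == y] is Some i then g i else y.
have hf : forall i, h (f i) = g i.
  move=> i; rewrite /h; case: pickP => [j /eqP fj | /(_ i)]; last by rewrite eqxx.
  exact: Hfg.
have E : [set g i | i : T1] = h @: [set f i | i : T1].
  by rewrite -imset_comp; apply: eq_imset => i; rewrite /= hf.
split; first by rewrite E leq_imset_card.
move=> Heq i j gij; rewrite E in Heq.
have /imset_injP inj : #|h @: [set f i | i : T1]| == #|[set f i | i : T1]| by rewrite Heq.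
by apply: inj; rewrite ?imset_f // !hf.
Qed.

Lemma cnt_T n (x y : part n) : Istar x -> Istar y -> (forall i j, Tp x i j -> Tp y i j) ->
  cT y <= cT x /\ (cT y = cT x -> forall i j, Tp y i j -> Tp x i j).
Proof.
move=> Hx Hy Hxy.
have := @refine_card _ _ (fun i => block x (inl i)) (fun i => block y (inl i)).
case.
  by move=> i j /eqP; rewrite block_eq // => /Hxy h; apply/eqP; rewrite block_eq.
move=> le H; split => // E i j h.
have gij : block y (inl i) = block y (inl j) by apply/eqP; rewrite block_eq.
by move: (H E i j gij) => /eqP; rewrite block_eq.
Qed.

Lemma cnt_B n (x y : part n) : Istar x -> Istar y -> (forall i j, Bp x i j -> Bp y i j) ->
  cB y <= cB x /\ (cB y = cB x -> forall i j, Bp y i j -> Bp x i j).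
Proof.
move=> Hx Hy Hxy.
have := @refine_card _ _ (fun i => block x (inr i)) (fun i => block y (inr i)).
case.
  by move=> i j /eqP; rewrite block_eq // => /Hxy h; apply/eqP; rewrite block_eq.
move=> le H; split => // E i j h.
have gij : block y (inr i) = block y (inr j) by apply/eqP; rewrite block_eq.
by move: (H E i j gij) => /eqP; rewrite block_eq.
Qed.

Theorem mainTheorem11 (n : nat) (e : part n) :
  2 <= n -> Istar e -> pmul e e = e -> rank e = n.-1 ->
  is_subsemigroup (Hclass e) /\ isolated (Hclass e).
Proof.
move=> n2 He Hee Hr.
have D := idem_diag He Hee.
split.
  split; first by move=> a [].
  move=> a b [Ha Hae] [Hb Hbe].
  have [aT aB] := Hrel_fwd He D Hae; have [bT bB] := Hrel_fwd He D Hbe.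
  have Hab := Istar_mul Ha Hb.
  have h1 : forall i j, Tp b i j -> Bp a i j.
    by move=> i' j'; rewrite (bT i' j') -(aB i' j').
  have h2 : forall i j, Bp a i j -> Tp b i j.
    by move=> i' j'; rewrite (aB i' j') -(bT i' j').
  split => //; apply: Hrel_back => //.
    move=> i j; apply/idP/idP.
      by move/(Tmul_sub Ha Hb h1); rewrite (aT i j).
    by rewrite -(aT i j); apply: T_mulL.
  move=> i j; apply/idP/idP.
    by move/(Bmul_sub Ha Hb h2); rewrite (bB i j).
  by rewrite -(bB i j); apply: B_mulR.
move=> a Ha k k1 [Hb Hbe].
rewrite /ppow in Hb Hbe *.
pose F := fun x => pmul x a.
have It : forall m, Istar (iter m F a) /\ (forall i j, Tp a i j -> Tp (iter m F a) i j)
    /\ (forall i j, Bp a i j -> Bp (iter m F a) i j).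
  elim=> [|m [Hi [IT IB]]] /=; first by split.
  split; first exact: Istar_mul.
  by split => i j h; [apply: T_mulL; exact: IT | exact: B_mulR].
move: Hb Hbe; rewrite -/F; set b := iter k.-1 F a => Hb Hbe.
have [bT bB] := Hrel_fwd He D Hbe.
have [_ [abT abB]] := It k.-1.
have cTb : cT b = n.-1.
  have t1 : forall i j, Tp b i j -> Tp e i j by move=> i j; rewrite bT.
  have t2 : forall i j, Tp e i j -> Tp b i j by move=> i j; rewrite -(bT i j).
  have [l1 _] := cnt_T Hb He t1.
  have [l2 _] := cnt_T He Hb t2.
  by rewrite -Hr (rankT He); apply/eqP; rewrite eqn_leq l1 l2.
have [leTa eqTa] := cnt_T Ha Hb abT.
have cTle : cT a <= n.
  by rewrite /cT; apply: leq_trans (leq_imset_card _ _) _; rewrite card_ord.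
case: (cT a =P n.-1) => [E|NE].
  have bTa := eqTa (etrans cTb (esym E)).
  have [_ eqBa] := cnt_B Ha Hb abB.
  have cBeq : cB b = cB a by rewrite -(rankB Hb) -(rankB Ha) (rankT Hb) (rankT Ha) cTb E.
  have bBa := eqBa cBeq.
  split => //; apply: Hrel_back => // i j; apply/idP/idP.
  - by move/abT; rewrite (bT i j).
  - by rewrite -(bT i j); apply: bTa.
  - by move/abB; rewrite (bB i j).
  - by rewrite -(bB i j); apply: bBa.
have cTa : cT a = n by lia.
have : #|[set block a (inl i) | i : 'I_n]| == #|'I_n| by rewrite card_ord; apply/eqP.
move/imset_injP => inj.
have disc : forall i j, Tp a i j -> i = j.
  by move=> i j h; apply: inj => //; apply/eqP; rewrite block_eq.
have discI : forall m i j, Tp (iter m F a) i j -> i = j.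
  elim=> [|m IH] i j //=; first exact: disc.
  have [Hi _] := It m.
  have hh : forall i j, Tp a i j -> Bp (iter m F a) i j.
    by move=> i' j' /disc ->; apply: relR.
  by move=> h; apply: IH; apply: (Tmul_sub Hi Ha hh); exact: h.
have : #|[set block b (inl i) | i : 'I_n]| == #|'I_n|.
  by apply/imset_injP => i j _ _ /eqP; rewrite block_eq // => /discI.
rewrite card_ord; move/eqP; rewrite -/(cT b) cTb; lia.
Qed.
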